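(* Let $0<\delta\le\rho\le r\le1$ and let $L,\tilde L\subset\mathcal{L}_{SL_2}$ be finite. (i) Suppose $\tilde L$ is $\rho$-separated and contained in a ball of radius $r$. Then there is $\tilde L'\subset\tilde L$ with $\#\tilde L'\gtrsim(\rho/r)\#\tilde L$ such that $\#(\tilde L'\cap B)\le(s/\rho)^2$ for every $s\in[\rho,1]$ and every ball $B\subset\mathbb{R}^4$ of radius $s$. (ii) Suppose $\#(L\cap B)\le(s/\delta)^2$ for every $s\in[\delta,1]$ and every ball $B\subset\mathbb{R}^4$ of radius $s$, and $L\subset\bigcup_{\tilde\ell\in\tilde L}B(\tilde\ell,\rho)$. Then for every $\varepsilon>0$ there exist $c=c(\varepsilon)>0$ and $\tilde L'\subset\tilde L$ with $\#\tilde L'\gtrsim c\,\delta^{\varepsilon}(\delta/\rho)^2\#L$ such that $\#(\tilde L'\cap B)\le(s/\rho)^2$ for every $s\in[\rho,1]$ and every ball $B\subset\mathbb{R}^4$ of radius $s$.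
   Context: For $(a,b,c,d)\in\mathbb{R}^4$ with $ad-bc=1$, $\ell_{(a,b,c,d)}=\{(a,b,0)+s(c,d,1):s\in\mathbb{R}\}$; $\mathcal{L}_{SL_2}$ is the set of such lines, each identified with its parameter in $\mathbb{R}^4$; separation, balls and distances are taken in parameter space with the Euclidean metric. A number $R\ge1$ is fixed and only lines with parameter in $B(0,R)\subset\mathbb{R}^4$ are considered; $X\lesssim Y$ means $X\le CY$ with $C$ depending only on $R$. *)

(* Defs.v *)
From Stdlib Require Import Reals List.
Import ListNotations.
Open Scope R_scope.

(* Parameter space R^4; a point (a,b,c,d) parametrizes the line
   {(a,b,0) + s(c,d,1)}. *)
Definition pt : Type := (R * R * R * R)%type.

Definition dist4 (p q : pt) : R :=
  let '(a1, b1, c1, d1) := p in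
  let '(a2, b2, c2, d2) := q in
  sqrt ((a1 - a2)^2 + (b1 - b2)^2 + (c1 - c2)^2 + (d1 - d2)^2).

Definition origin : pt := (0, 0, 0, 0).

Definition in_ball (x : pt) (s : R) (p : pt) : Prop := dist4 p x < s.

Definition in_ballb (x : pt) (s : R) (p : pt) : bool :=
  if Rlt_dec (dist4 p x) s then true else false.

(* Parameter of a line in L_{SL_2} lying in B(0,R0). *)
Definition admissible (R0 : R) (p : pt) : Prop :=
  (let '(a, b, c, d) := p in a * d - b * c = 1) /\ in_ball origin R0 p.

(* A finite set of lines: duplicate-free list; cardinality = length. *)
Definition card (L : list pt) : R := INR (length L).

Definition count_in_ball (L : list pt) (x : pt) (s : R) : R :=
  INR (length (filter (in_ballb x s) L)).

Definition separated (rho : R) (L : list pt) : Prop :=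
  forall p q, In p L -> In q L -> p <> q -> rho <= dist4 p q.

Definition frostman2 (t : R) (L : list pt) : Prop :=
  forall (s : R) (x : pt), t <= s <= 1 -> count_in_ball L x s <= (s / t)^2.

Definition sublist (L' L : list pt) : Prop := NoDup L' /\ incl L' L.

(* Main.v *)
Require Import Defs.
From Stdlib Require Import Reals List.
Open Scope R_scope.
From Stdlib Require Import Lra Lia Psatz Classical ZArith.
Import ListNotations.
Open Scope R_scope.

Lemma sqrt_ge_of_sq (x y : R) : 0 <= y -> x ^ 2 <= y -> x <= sqrt y.
Proof.
  intros Hy H. destruct (Rle_dec x 0). { pose proof (sqrt_pos y); lra. }
  rewrite <- (sqrt_pow2 x) by lra. apply sqrt_le_1_alt; lra.
Qed.

Lemma sqrt_le_of_sq (x y : R) : 0 <= y -> x <= y ^ 2 -> sqrt x <= y.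
Proof.
  intros Hy H. rewrite <- (sqrt_pow2 y) by lra. apply sqrt_le_1_alt; lra.
Qed.

Lemma sqrt_lt_of_sq (x y : R) : 0 <= x -> 0 <= y -> x < y ^ 2 -> sqrt x < y.
Proof.
  intros Hx Hy H. rewrite <- (sqrt_pow2 y) by lra. apply sqrt_lt_1_alt; lra.
Qed.

Lemma dist4_nonneg p q : 0 <= dist4 p q.
Proof. destruct p as [[[a b] c] d], q as [[[a' b'] c'] d']; simpl; apply sqrt_pos. Qed.

Lemma dist4_sym p q : dist4 p q = dist4 q p.
Proof.
  destruct p as [[[a b] c] d], q as [[[a' b'] c'] d']; simpl; f_equal; ring.
Qed.

Lemma dist4_refl p : dist4 p p = 0.
Proof.
  destruct p as [[[a b] c] d]; simpl.
  replace ((a - a) * ((a - a) * 1) + (b - b) * ((b - b) * 1) + (c - c) * ((c - c) * 1) +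
   (d - d) * ((d - d) * 1)) with 0 by ring. apply sqrt_0.
Qed.

Lemma mink (u1 u2 u3 u4 v1 v2 v3 v4 : R) :
  sqrt ((u1+v1)^2 + (u2+v2)^2 + (u3+v3)^2 + (u4+v4)^2) <=
  sqrt (u1^2+u2^2+u3^2+u4^2) + sqrt (v1^2+v2^2+v3^2+v4^2).
Proof.
  set (U := u1^2+u2^2+u3^2+u4^2). set (V := v1^2+v2^2+v3^2+v4^2).
  assert (HU : 0 <= U) by (unfold U; nra). assert (HV : 0 <= V) by (unfold V; nra).
  assert (HC : u1*v1+u2*v2+u3*v3+u4*v4 <= sqrt U * sqrt V).
  { rewrite <- sqrt_mult by lra. apply sqrt_ge_of_sq. nra.
    unfold U, V.
    assert (0 <= (u1*v2-u2*v1)^2 + (u1*v3-u3*v1)^2 + (u1*v4-u4*v1)^2 + (u2*v3-u3*v2)^2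
       + (u2*v4-u4*v2)^2 + (u3*v4-u4*v3)^2) by (apply Rplus_le_le_0_compat; try apply pow2_ge_0;
       repeat apply Rplus_le_le_0_compat; apply pow2_ge_0).
    nra. }
  apply sqrt_le_of_sq. pose proof (sqrt_pos U); pose proof (sqrt_pos V); lra.
  replace ((sqrt U + sqrt V)^2) with (sqrt U ^2 + sqrt V ^2 + 2 * (sqrt U * sqrt V)) by ring.
  rewrite !pow2_sqrt by lra.
  replace ((u1+v1)^2 + (u2+v2)^2 + (u3+v3)^2 + (u4+v4)^2) with
    (U + V + 2 * (u1*v1+u2*v2+u3*v3+u4*v4)) by (unfold U, V; ring). lra.
Qed.

Lemma dist4_tri p q r : dist4 p r <= dist4 p q + dist4 q r.
Proof.
  destruct p as [[[a b] c] d], q as [[[a' b'] c'] d'], r as [[[a'' b''] c''] d'']; simpl.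
  pose proof (mink (a-a') (b-b') (c-c') (d-d') (a'-a'') (b'-b'') (c'-c'') (d'-d'')) as H.
  simpl in H.
  replace (a - a' + (a' - a'')) with (a - a'') in H by ring.
  replace (b - b' + (b' - b'')) with (b - b'') in H by ring.
  replace (c - c' + (c' - c'')) with (c - c'') in H by ring.
  replace (d - d' + (d' - d'')) with (d - d'') in H by ring.
  exact H.
Qed.

Lemma dist4_coords a b c d a' b' c' d' :
  Rabs (a - a') <= dist4 (a,b,c,d) (a',b',c',d') /\
  Rabs (b - b') <= dist4 (a,b,c,d) (a',b',c',d') /\
  Rabs (c - c') <= dist4 (a,b,c,d) (a',b',c',d') /\
  Rabs (d - d') <= dist4 (a,b,c,d) (a',b',c',d').
Proof.
  pose proof (pow2_abs (a-a')). pose proof (pow2_abs (b-b')).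
  pose proof (pow2_abs (c-c')). pose proof (pow2_abs (d-d')).
  simpl in *. repeat split; apply sqrt_ge_of_sq; nra.
Qed.

Lemma dist4_small a b c d a' b' c' d' ea eb ec ed r :
  0 <= r ->
  Rabs (a - a') <= ea -> Rabs (b - b') <= eb -> Rabs (c - c') <= ec -> Rabs (d - d') <= ed ->
  ea^2 + eb^2 + ec^2 + ed^2 < r^2 -> dist4 (a,b,c,d) (a',b',c',d') < r.
Proof.
  intros Hr Ha Hb Hc Hd H. simpl. apply sqrt_lt_of_sq; [|lra|].
  { pose proof (pow2_ge_0 (a-a')). pose proof (pow2_ge_0 (b-b')).
  pose proof (pow2_ge_0 (c-c')). pose proof (pow2_ge_0 (d-d')). simpl in *; lra. }
  assert (forall x e, Rabs x <= e -> x*(x*1) <= e^2).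
  { intros x e Hx. pose proof (Rabs_pos x). pose proof (pow2_abs x). simpl in *. nra. }
  pose proof (H0 _ _ Ha). pose proof (H0 _ _ Hb). pose proof (H0 _ _ Hc). pose proof (H0 _ _ Hd).
  simpl in *; lra.
Qed.

Definition sumf {X : Type} (f : X -> R) (l : list X) : R :=
  fold_right (fun x acc => f x + acc) 0 l.

Lemma sumf_app {X} (f : X -> R) l1 l2 : sumf f (l1 ++ l2) = sumf f l1 + sumf f l2.
Proof. induction l1; simpl; [ring| rewrite IHl1; ring]. Qed.

Lemma sumf_map {X Y} (f : Y -> R) (g : X -> Y) l : sumf f (map g l) = sumf (fun x => f (g x)) l.
Proof. induction l; simpl; [ring| rewrite IHl; ring]. Qed.

Lemma sumf_le {X} (f g : X -> R) l : (forall x, In x l -> f x <= g x) -> sumf f l <= sumf g l.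
Proof.
  induction l; simpl; intros H; [lra|].
  pose proof (H a (or_introl eq_refl)). pose proof (IHl (fun x Hx => H x (or_intror Hx))). lra.
Qed.

Lemma sumf_scale {X} (f : X -> R) c l : sumf (fun x => c * f x) l = c * sumf f l.
Proof. induction l; simpl; [ring| rewrite IHl; ring]. Qed.

Lemma sumf_const_le {X} (f : X -> R) M l : (forall x, In x l -> f x <= M) ->
  sumf f l <= INR (length l) * M.
Proof.
  induction l; intros H; [simpl; lra|].
  pose proof (H a (or_introl eq_refl)). pose proof (IHl (fun x Hx => H x (or_intror Hx))).
  change (length (a :: l)) with (S (length l)). rewrite S_INR. simpl. lra.
Qed.

Lemma union_bound {X A} (P : X -> A -> bool) (Ps : list X) (L : list A) :
  (forall z, In z L -> exists j, In j Ps /\ P j z = true) ->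
  INR (length L) <= sumf (fun j => INR (length (filter (P j) L))) Ps.
Proof.
  revert L; induction Ps as [|j Ps IH]; intros L H; simpl.
  - destruct L as [|z L]; simpl; [lra|]. destruct (H z (or_introl eq_refl)) as [j [[] _]].
  - pose proof (filter_length (P j) L) as E.
    assert (H2 : INR (length (filter (fun x => negb (P j x)) L)) <=
      sumf (fun j0 => INR (length (filter (P j0) (filter (fun x => negb (P j x)) L)))) Ps).
    { apply IH. intros z Hz. apply filter_In in Hz as [Hz Hn].
      destruct (H z Hz) as [k [[<-|Hk] Hkz]]. rewrite Hkz in Hn; discriminate.
      eauto. }
    assert (H3 : sumf (fun j0 => INR (length (filter (P j0) (filter (fun x => negb (P j x)) L)))) Ps
       <= sumf (fun j0 => INR (length (filter (P j0) L))) Ps).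
    { apply sumf_le. intros k _. apply le_INR.
      clear. induction L; simpl; auto. destruct (P j a); simpl; destruct (P k a); simpl; lia. }
    rewrite <- E, plus_INR. lra.
Qed.

Lemma filter_filter_le {A} (f g h : A -> bool) (L : list A) :
  (forall z, In z L -> g z = true -> f z = true -> h z = true) ->
  (length (filter f (filter g L)) <= length (filter h L))%nat.
Proof.
  induction L as [|a L IH]; simpl; intros H; auto.
  pose proof (IH (fun z Hz => H z (or_intror Hz))).
  specialize (H a (or_introl eq_refl)).
  destruct (g a); simpl; destruct (f a); simpl; try destruct (h a); simpl; try lia;
  specialize (H eq_refl eq_refl); discriminate.
Qed.

Lemma filter_le_impl {A} (f h : A -> bool) (L : list A) :
  (forall z, In z L -> f z = true -> h z = true) ->
  (length (filter f L) <= length (filter h L))%nat.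
Proof.
  induction L as [|a L IH]; simpl; intros H; auto.
  pose proof (IH (fun z Hz => H z (or_intror Hz))).
  specialize (H a (or_introl eq_refl)).
  destruct (f a); simpl; try destruct (h a); simpl; try lia;
  specialize (H eq_refl); discriminate.
Qed.

Lemma length_le1 {A} (l : list A) : NoDup l ->
  (forall p q, In p l -> In q l -> p <> q -> False) -> (length l <= 1)%nat.
Proof.
  intros Hn H. destruct l as [|p [|q l]]; simpl; try lia.
  exfalso. apply (H p q); simpl; auto. intros ->. inversion Hn; subst. apply H2; simpl; auto.
Qed.

Lemma in_ballb_true x s p : in_ballb x s p = true <-> dist4 p x < s.
Proof. unfold in_ballb. destruct (Rlt_dec (dist4 p x) s); split; intros; auto; try lra; discriminate. Qed.

Lemma count_nonneg L x s : 0 <= count_in_ball L x s.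
Proof. apply pos_INR. Qed.

Definition meets (b d : pt * R) : Prop := dist4 (fst b) (fst d) < snd b + snd d.

Fixpoint Pw (l : list (pt * R)) : Prop :=
  match l with [] => True | d :: l' => (forall e, In e l' -> ~ meets d e) /\ Pw l' end.

Lemma meets_of_common b d z : dist4 z (fst b) < snd b -> dist4 z (fst d) < snd d -> meets b d.
Proof.
  unfold meets; intros. pose proof (dist4_tri (fst b) z (fst d)). rewrite (dist4_sym (fst b) z) in H1. lra.
Qed.

Lemma exists_max (l : list (pt * R)) : l <> [] -> exists m, In m l /\ forall b, In b l -> snd b <= snd m.
Proof.
  induction l as [|a l IH]; intros H; [congruence|].
  destruct l as [|a' l'].
  - exists a; split; [simpl; auto|]. intros b [<-|[]]; lra.
  - destruct IH as [m [Hm Hmax]]; [discriminate|].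
    destruct (Rle_dec (snd a) (snd m)).
    + exists m; split; [right; auto|]. intros b [<-|Hb]; auto.
    + exists a; split; [left; auto|]. intros b [<-|Hb]; [lra|]. specialize (Hmax b Hb); lra.
Qed.

Lemma filter_length_lt {A} (f : A -> bool) l x : In x l -> f x = false -> (length (filter f l) < length l)%nat.
Proof.
  induction l as [|a l IH]; simpl; intros Hx Hf; [destruct Hx|].
  pose proof (filter_length_le f l).
  destruct Hx as [<-|Hx]; [rewrite Hf; lia|]. specialize (IH Hx Hf). destruct (f a); simpl; lia.
Qed.

Lemma vitali (Bs : list (pt * R)) : (forall b, In b Bs -> 0 < snd b) ->
  exists D, incl D Bs /\ Pw D /\ forall b, In b Bs -> exists d, In d D /\ meets b d /\ snd b <= snd d.
Proof.
  remember (length Bs) as n. assert (Hn : (length Bs <= n)%nat) by lia. clear Heqn.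
  revert Bs Hn. induction n as [|n IH]; intros Bs Hn Hpos.
  - destruct Bs; [|simpl in Hn; lia]. exists []. repeat split; [intros x []|]. intros b [].
  - destruct Bs as [|b0 Bs0] eqn:EB.
    + exists []. repeat split; [intros x []|]. intros b [].
    + rewrite <- EB in *. destruct (exists_max Bs) as [m [Hm Hmax]]; [subst; discriminate|].
      set (f := fun b : pt * R => if Rlt_dec (dist4 (fst m) (fst b)) (snd m + snd b) then false else true).
      assert (Hlt : (length (filter f Bs) < length Bs)%nat).
      { apply (filter_length_lt f Bs m Hm). unfold f. rewrite dist4_refl.
        destruct (Rlt_dec 0 (snd m + snd m)); auto. specialize (Hpos m Hm). lra. }
      destruct (IH (filter f Bs)) as [D' [Hinc [Hpw Hcov]]]; [lia| |].
      { intros b Hb. apply filter_In in Hb. apply Hpos; tauto. }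
      exists (m :: D'). split; [|split].
      * intros x [<-|Hx]; auto. apply Hinc in Hx. apply filter_In in Hx; tauto.
      * split; auto. intros e He Hme. apply Hinc in He. apply filter_In in He as [_ He].
        unfold f, meets in *. destruct (Rlt_dec _ _); [discriminate| lra].
      * intros b Hb. destruct (Rlt_dec (dist4 (fst m) (fst b)) (snd m + snd b)) as [Hmb|Hmb].
        -- exists m. split; [left; auto|]. split; [|auto]. unfold meets. rewrite dist4_sym. lra.
        -- destruct (Hcov b) as [d [Hd1 Hd2]]. apply filter_In; split; auto. unfold f.
           destruct (Rlt_dec _ _); [contradiction|auto].
           exists d; split; [right; auto| auto].
Qed.

Lemma filter_eq_le {A} (f g : A -> bool) (L : list A) :
  (forall z, In z L -> f z = true -> g z = true) ->
  (length (filter f L) <= length (filter f (filter g L)))%nat.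
Proof.
  induction L as [|a L IH]; simpl; intros H; auto.
  pose proof (IH (fun z Hz => H z (or_intror Hz))).
  specialize (H a (or_introl eq_refl)).
  destruct (f a) eqn:Ef; simpl; try destruct (g a) eqn:Eg; simpl; try rewrite Ef; simpl; try lia;
  specialize (H eq_refl); discriminate.
Qed.

Lemma disjoint_sum (D : list (pt * R)) (S : list pt) : Pw D ->
  sumf (fun d => INR (length (filter (in_ballb (fst d) (snd d)) S))) D <= INR (length S).
Proof.
  revert S; induction D as [|m D IH]; intros S HP; simpl.
  - apply pos_INR.
  - destruct HP as [Hm HP].
    set (g := fun z => negb (in_ballb (fst m) (snd m) z)).
    pose proof (IH (filter g S) HP) as H1.
    assert (H2 : sumf (fun d => INR (length (filter (in_ballb (fst d) (snd d)) S))) D <=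
                 sumf (fun d => INR (length (filter (in_ballb (fst d) (snd d)) (filter g S)))) D).
    { apply sumf_le. intros d Hd. apply le_INR. apply filter_eq_le. intros z _ Hz.
      unfold g. destruct (in_ballb (fst m) (snd m) z) eqn:E; auto.
      exfalso. apply (Hm d Hd). apply in_ballb_true in E, Hz. eapply meets_of_common; eauto. }
    pose proof (filter_length (in_ballb (fst m) (snd m)) S) as E.
    fold g in E. rewrite <- E, plus_INR. lra.
Qed.

Lemma frostman_mono rho q q' S : frostman2 rho (q' :: q :: S) -> frostman2 rho (q' :: S).
Proof.
  unfold frostman2, count_in_ball. intros H s x Hs. specialize (H s x Hs).
  eapply Rle_trans; [|exact H]. apply le_INR. simpl.
  destruct (in_ballb x s q'); destruct (in_ballb x s q); simpl; lia.
Qed.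

Lemma frostman_nil rho : frostman2 rho [].
Proof. intros s x _. unfold count_in_ball. simpl. apply pow2_ge_0. Qed.

Lemma greedy (rho : R) (Q : list pt) : exists S, NoDup S /\ incl S Q /\ frostman2 rho S /\
  forall q, In q Q -> ~ In q S -> ~ frostman2 rho (q :: S).
Proof.
  induction Q as [|a Q IH].
  - exists []. repeat split; [constructor|intros x []|apply frostman_nil|]. intros q [].
  - destruct IH as [S [Hnd [Hinc [Hf Hmax]]]].
    destruct (classic (~ In a S /\ frostman2 rho (a :: S))) as [[Hn Ha]|Hn].
    + exists (a :: S). split; [constructor; auto|]. split; [|split; auto].
      * intros x [<-|Hx]; [left; auto|right; auto].
      * intros q Hq HqS Hfq. apply HqS. destruct Hq as [<-|Hq]; [left; auto|].
        destruct (classic (In q S)) as [|HqS']; [right; auto|].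
        exfalso. apply (Hmax q Hq HqS'). eapply frostman_mono; eauto.
    + exists S. split; auto. split; [intros x Hx; right; auto|]. split; auto.
      intros q [<-|Hq] HqS; auto.
Qed.

Lemma blocked_rich rho Sl q : 0 < rho -> frostman2 rho Sl -> ~ frostman2 rho (q :: Sl) ->
  exists x s, rho <= s <= 1 /\ dist4 q x < s /\ (s / rho)^2 <= 2 * count_in_ball Sl x s.
Proof.
  intros Hr HS Hq. unfold frostman2 in Hq.
  apply not_all_ex_not in Hq as [s Hq]. apply not_all_ex_not in Hq as [x Hq].
  apply imply_to_and in Hq as [Hs Hq].
  exists x, s. specialize (HS s x Hs).
  assert (H1 : 1 <= (s / rho)^2).
  { assert (1 <= s / rho) by (apply (Rmult_le_reg_r rho); [lra|]; unfold Rdiv; rewrite Rmult_assoc, Rinv_l; lra). nra. }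
  unfold count_in_ball in *. 
  destruct (in_ballb x s q) eqn:E.
  - pose proof (proj1 (in_ballb_true x s q) E) as E2. split; auto. split; auto.
    replace (filter (in_ballb x s) (q :: Sl)) with (q :: filter (in_ballb x s) Sl) in Hq
      by (simpl; rewrite E; auto).
    change (length (q :: filter (in_ballb x s) Sl)) with (Datatypes.S (length (filter (in_ballb x s) Sl))) in Hq.
    rewrite S_INR in Hq.
    destruct (length (filter (in_ballb x s) Sl)) as [|n].
    + simpl in *. lra.
    + pose proof (pos_INR n). rewrite S_INR in *. lra.
  - replace (filter (in_ballb x s) (q :: Sl)) with (filter (in_ballb x s) Sl) in Hq
      by (simpl; rewrite E; auto). lra.
Qed.

Lemma collect {X Y} (P : X -> Prop) (R : Y -> Prop) (G : X -> Y -> Prop) (l : list X) :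
  (forall q, In q l -> P q -> exists b, R b /\ G q b) ->
  exists Bs, (forall b, In b Bs -> R b) /\ forall q, In q l -> P q -> exists b, In b Bs /\ G q b.
Proof.
  induction l as [|a l IH]; intros H.
  - exists []. split; [intros b []|intros q []].
  - destruct IH as [Bs [HR HG]]; [intros q Hq; apply H; right; auto|].
    destruct (classic (P a)) as [Pa|nPa].
    + destruct (H a (or_introl eq_refl) Pa) as [b [Rb Gb]].
      exists (b :: Bs). split; [intros b' [<-|Hb']; auto|].
      intros q [<-|Hq] Pq; [exists b; split; [left|]; auto|].
      destruct (HG q Hq Pq) as [b' [? ?]]; exists b'; split; [right|]; auto.
    + exists Bs. split; auto. intros q [<-|Hq] Pq; [contradiction|auto].
Qed.

Definition lo (y t h : R) : Z := Int_part ((y - t) / h).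
Definition idx (h : R) (l : Z) (v : R) : nat := Z.to_nat (Int_part (v / h) - l).
Definition ncell (t h : R) : nat := S (Z.to_nat (up (2 * t / h))).

Lemma ip_spec r : IZR (Int_part r) <= r /\ r < IZR (Int_part r) + 1.
Proof. pose proof (base_Int_part r). lra. Qed.

Lemma ip_mono r1 r2 : r1 <= r2 -> (Int_part r1 <= Int_part r2)%Z.
Proof.
  intros H. pose proof (ip_spec r1). pose proof (ip_spec r2).
  assert (IZR (Int_part r1) < IZR (Int_part r2 + 1)) by (rewrite plus_IZR; lra).
  apply lt_IZR in H2. lia.
Qed.

Lemma idx_lt h t y v : 0 < h -> 0 < t -> Rabs (v - y) < t -> (idx h (lo y t h) v < ncell t h)%nat.
Proof.
  intros Hh Ht Hv. unfold idx, lo, ncell.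
  apply Rabs_def2 in Hv.
  assert (E1 : (y - t) / h <= v / h) by (apply Rmult_le_compat_r; [left; apply Rinv_0_lt_compat; lra| lra]).
  assert (E2 : v / h < (y - t) / h + 2 * t / h).
  { unfold Rdiv. rewrite <- Rmult_plus_distr_r. apply Rmult_lt_compat_r; [apply Rinv_0_lt_compat; lra|lra]. }
  pose proof (ip_mono _ _ E1).
  pose proof (ip_spec (v/h)). pose proof (ip_spec ((y-t)/h)). pose proof (archimed (2*t/h)).
  assert (IZR (Int_part (v / h) - Int_part ((y - t) / h)) < IZR (up (2 * t / h) + 1))
    by (rewrite minus_IZR, plus_IZR; lra).
  apply lt_IZR in H3. lia.
Qed.

Lemma idx_eq h t y v v' : 0 < h -> Rabs (v - y) < t -> Rabs (v' - y) < t ->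
  idx h (lo y t h) v = idx h (lo y t h) v' -> Rabs (v - v') < h.
Proof.
  intros Hh Hv Hv' E. unfold idx, lo in E.
  apply Rabs_def2 in Hv. apply Rabs_def2 in Hv'.
  assert (E1 : (y - t) / h <= v / h) by (apply Rmult_le_compat_r; [left; apply Rinv_0_lt_compat; lra| lra]).
  assert (E1' : (y - t) / h <= v' / h) by (apply Rmult_le_compat_r; [left; apply Rinv_0_lt_compat; lra| lra]).
  pose proof (ip_mono _ _ E1). pose proof (ip_mono _ _ E1').
  assert (Int_part (v/h) = Int_part (v'/h)) by lia.
  pose proof (ip_spec (v/h)). pose proof (ip_spec (v'/h)). rewrite H1 in H2.
  assert (Rabs (v/h - v'/h) < 1) by (apply Rabs_def1; lra).
  replace (v/h - v'/h) with ((v - v') / h) in H4 by (field; lra).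
  unfold Rdiv in H4. rewrite Rabs_mult, Rabs_inv, (Rabs_right h) in H4 by lra.
  apply (Rmult_lt_compat_r h) in H4; [|lra]. rewrite Rmult_assoc, Rinv_l in H4 by lra. lra.
Qed.

Lemma ncell_bound t h : 0 < h -> 0 < t -> INR (ncell t h) <= 2 * t / h + 2.
Proof.
  intros Hh Ht. unfold ncell. rewrite S_INR. pose proof (archimed (2*t/h)).
  assert (0 < 2 * t / h) by (unfold Rdiv; apply Rmult_lt_0_compat; [lra|apply Rinv_0_lt_compat; lra]).
  assert (0 < IZR (up (2*t/h))) by lra. apply lt_IZR in H1.
  rewrite INR_IZR_INZ, Z2Nat.id by lia. lra.
Qed.

Lemma coords_lt a b c d a' b' c' d' t : dist4 (a,b,c,d) (a',b',c',d') < t ->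
  Rabs (a - a') < t /\ Rabs (b - b') < t /\ Rabs (c - c') < t /\ Rabs (d - d') < t.
Proof. intros H. pose proof (dist4_coords a b c d a' b' c' d'). lra. Qed.

Lemma key a1 b1 c1 d1 a2 b2 c2 d2 R0 : a1*d1 - b1*c1 = a2*d2 - b2*c2 -> 1/2 <= Rabs d1 ->
  Rabs b1 <= R0 -> Rabs c2 <= R0 -> Rabs a2 <= R0 ->
  Rabs (a1 - a2) <= 2 * R0 * (Rabs (b1 - b2) + Rabs (c1 - c2) + Rabs (d1 - d2)).
Proof.
  intros E Hd Hb Hc Ha.
  assert (E2 : (a1 - a2) * d1 = b1 * (c1 - c2) + c2 * (b1 - b2) - a2 * (d1 - d2)) by nra.
  assert (H1 : Rabs (a1 - a2) * Rabs d1 <= R0 * (Rabs (b1 - b2) + Rabs (c1 - c2) + Rabs (d1 - d2))).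
  { rewrite <- Rabs_mult, E2. unfold Rminus at 1.
    eapply Rle_trans; [apply Rabs_triang|]. rewrite Rabs_Ropp.
    eapply Rle_trans; [apply Rplus_le_compat_r, Rabs_triang|]. rewrite !Rabs_mult.
    pose proof (Rabs_pos (b1 - b2)). pose proof (Rabs_pos (c1 - c2)). pose proof (Rabs_pos (d1 - d2)).
    nra. }
  pose proof (Rabs_pos (a1 - a2)). nra.
Qed.

Definition h_of (R0 rho : R) : R := rho / (12 * R0).

Definition fr (k : nat) (p : pt) : R * R * R :=
  let '(a, b, c, d) := p in
  match k with 0 => (b, c, a) | 1 => (a, d, b) | 2 => (a, d, c) | _ => (b, c, d) end.

Definition cell (R0 rho t : R) (y : pt) (k : nat) (p : pt) : nat * nat * nat :=
  let h := h_of R0 rho in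
  let '(u1, u2, u3) := fr k p in
  let '(w1, w2, w3) := fr k y in
  (idx h (lo w1 t h) u1, idx h (lo w2 t h) u2, idx h (lo w3 t h) u3).

Definition coord (k : nat) (p : pt) : R :=
  let '(a, b, c, d) := p in
  match k with 0 => a | 1 => b | 2 => c | _ => d end.

Definition cls (k : nat) (p : pt) : bool := if Rle_dec (1/2) (Rabs (coord k p)) then true else false.

Lemma small_close R0 rho h e1 e2 e3 e4 (x1 x2 x3 x4 : R) : 1 <= R0 -> 0 < rho -> h = h_of R0 rho ->
  Rabs e1 < h -> Rabs e2 < h -> Rabs e3 < h -> Rabs e4 <= 2 * R0 * (Rabs e1 + Rabs e2 + Rabs e3) ->
  e1^2 + e2^2 + e3^2 + e4^2 < rho^2.
Proof.
  intros HR Hr Hh H1 H2 H3 H4. unfold h_of in Hh.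
  assert (Hh' : h * (12 * R0) = rho) by (subst; field; lra).
  pose proof (Rabs_pos e1). pose proof (Rabs_pos e2). pose proof (Rabs_pos e3).
  assert (0 < h) by lra.
  assert (2 * R0 * (Rabs e1 + Rabs e2 + Rabs e3) <= 2 * R0 * (3 * h)) by (apply Rmult_le_compat_l; lra).
  assert (Rabs e4 <= 6 * R0 * h) by lra.
  rewrite <- (pow2_abs e1), <- (pow2_abs e2), <- (pow2_abs e3), <- (pow2_abs e4).
  pose proof (Rabs_pos e4).
  assert (Rabs e1 ^2 < h^2) by nra. assert (Rabs e2 ^2 < h^2) by nra. assert (Rabs e3 ^2 < h^2) by nra.
  assert (Rabs e4 ^2 <= 36 * R0^2 * h^2) by nra.
  rewrite <- Hh'. replace ((h * (12 * R0))^2) with (144 * (R0^2 * h^2)) by ring.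
  assert (h^2 <= R0^2 * h^2).
  { assert (1 <= R0^2) by nra. assert (0 <= h^2) by nra. nra. }
  assert (0 < h^2) by nra. lra.
Qed.

Lemma close R0 rho t y p q k : 1 <= R0 -> 0 < rho -> admissible R0 p -> admissible R0 q ->
  dist4 p y < t -> dist4 q y < t -> cls k p = true -> cell R0 rho t y k p = cell R0 rho t y k q ->
  dist4 p q < rho.
Proof.
  intros HR Hr [Ep Bp] [Eq Bq] Hpy Hqy Hk Hc.
  destruct p as [[[a b] c] d], q as [[[a' b'] c'] d'], y as [[[ya yb] yc] yd].
  unfold in_ball, origin in Bp, Bq.
  apply coords_lt in Bp, Bq, Hpy, Hqy. rewrite !Rminus_0_r in Bp, Bq.
  unfold cls, coord in Hk.
  set (h := h_of R0 rho) in *.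
  assert (Hh : 0 < h) by (unfold h, h_of; apply Rdiv_lt_0_compat; lra).
  assert (Eq' : a*d - b*c = a'*d' - b'*c') by lra.
  destruct k as [|[|[|k]]]; unfold cell in Hc; simpl in Hc; fold h in Hc; injection Hc; intros I3 I2 I1;
  destruct (Rle_dec _ _) as [Hl|]; try discriminate.
  - apply (idx_eq h t yb) in I1; try tauto. apply (idx_eq h t yc) in I2; try tauto.
    apply (idx_eq h t ya) in I3; try tauto.
    pose proof (key d b c a d' b' c' a' R0 ltac:(lra) Hl ltac:(lra) ltac:(lra) ltac:(lra)) as K.
    apply (dist4_small _ _ _ _ _ _ _ _ (Rabs (a-a')) (Rabs (b-b')) (Rabs (c-c')) (Rabs (d-d'))); try lra.
    rewrite !pow2_abs. replace ((a-a')^2 + (b-b')^2 + (c-c')^2 + (d-d')^2) with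
      ((b-b')^2 + (c-c')^2 + (a-a')^2 + (d-d')^2) by ring.
    apply (small_close R0 rho h _ _ _ _ 0 0 0 0); auto.
  - apply (idx_eq h t ya) in I1; try tauto. apply (idx_eq h t yd) in I2; try tauto.
    apply (idx_eq h t yb) in I3; try tauto.
    pose proof (key c a d b c' a' d' b' R0 ltac:(lra) Hl ltac:(lra) ltac:(lra) ltac:(lra)) as K.
    apply (dist4_small _ _ _ _ _ _ _ _ (Rabs (a-a')) (Rabs (b-b')) (Rabs (c-c')) (Rabs (d-d'))); try lra.
    rewrite !pow2_abs. replace ((a-a')^2 + (b-b')^2 + (c-c')^2 + (d-d')^2) with
      ((a-a')^2 + (d-d')^2 + (b-b')^2 + (c-c')^2) by ring.
    apply (small_close R0 rho h _ _ _ _ 0 0 0 0); auto.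
  - apply (idx_eq h t ya) in I1; try tauto. apply (idx_eq h t yd) in I2; try tauto.
    apply (idx_eq h t yc) in I3; try tauto.
    pose proof (key b a d c b' a' d' c' R0 ltac:(lra) Hl ltac:(lra) ltac:(lra) ltac:(lra)) as K.
    apply (dist4_small _ _ _ _ _ _ _ _ (Rabs (a-a')) (Rabs (b-b')) (Rabs (c-c')) (Rabs (d-d'))); try lra.
    rewrite !pow2_abs. replace ((a-a')^2 + (b-b')^2 + (c-c')^2 + (d-d')^2) with
      ((a-a')^2 + (d-d')^2 + (c-c')^2 + (b-b')^2) by ring.
    apply (small_close R0 rho h _ _ _ _ 0 0 0 0); auto.
  - apply (idx_eq h t yb) in I1; try tauto. apply (idx_eq h t yc) in I2; try tauto.
    apply (idx_eq h t yd) in I3; try tauto.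
    pose proof (key a b c d a' b' c' d' R0 ltac:(lra) Hl ltac:(lra) ltac:(lra) ltac:(lra)) as K.
    apply (dist4_small _ _ _ _ _ _ _ _ (Rabs (a-a')) (Rabs (b-b')) (Rabs (c-c')) (Rabs (d-d'))); try lra.
    rewrite !pow2_abs. replace ((a-a')^2 + (b-b')^2 + (c-c')^2 + (d-d')^2) with
      ((b-b')^2 + (c-c')^2 + (d-d')^2 + (a-a')^2) by ring.
    apply (small_close R0 rho h _ _ _ _ 0 0 0 0); auto.
Qed.

Lemma cls_exists R0 p : admissible R0 p -> exists k, (k < 4)%nat /\ cls k p = true.
Proof.
  intros [E _]. destruct p as [[[a b] c] d].
  unfold cls, coord.
  destruct (Rle_dec (1/2) (Rabs a)) as [Ha|Ha].
  { exists 0%nat. split; [lia|]. simpl. destruct (Rle_dec _ _); [auto|contradiction]. }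
  destruct (Rle_dec (1/2) (Rabs b)) as [Hb|Hb].
  { exists 1%nat. split; [lia|]. simpl. destruct (Rle_dec _ _); [auto|contradiction]. }
  destruct (Rle_dec (1/2) (Rabs c)) as [Hc|Hc].
  { exists 2%nat. split; [lia|]. simpl. destruct (Rle_dec _ _); [auto|contradiction]. }
  destruct (Rle_dec (1/2) (Rabs d)) as [Hd|Hd].
  { exists 3%nat. split; [lia|]. simpl. destruct (Rle_dec _ _); [auto|contradiction]. }
  exfalso. pose proof (Rabs_pos a). pose proof (Rabs_pos b). pose proof (Rabs_pos c). pose proof (Rabs_pos d).
  assert (Rabs (a*d) < 1/4) by (rewrite Rabs_mult; nra).
  assert (Rabs (b*c) < 1/4) by (rewrite Rabs_mult; nra).
  assert (Rabs (a*d - b*c) <= Rabs (a*d) + Rabs (b*c)) by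
    (unfold Rminus; eapply Rle_trans; [apply Rabs_triang| rewrite Rabs_Ropp; lra]).
  rewrite E, Rabs_R1 in H5. lra.
Qed.

Lemma cell_in R0 rho t y z k n : 0 < rho -> 1 <= R0 -> 0 < t -> n = ncell t (h_of R0 rho) -> dist4 z y < t ->
  let '(i1, i2, i3) := cell R0 rho t y k z in (i1 < n /\ i2 < n /\ i3 < n)%nat.
Proof.
  intros Hr HR Ht Hn Hz. subst n.
  assert (Hh : 0 < h_of R0 rho) by (unfold h_of; apply Rdiv_lt_0_compat; lra).
  destruct z as [[[a b] c] d], y as [[[ya yb] yc] yd]. apply coords_lt in Hz.
  destruct k as [|[|[|k]]]; unfold cell; simpl; repeat split; apply idx_lt; tauto.
Qed.

Definition cell_dec (u v : nat * nat * nat) : {u = v} + {u <> v}.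
Proof. repeat decide equality. Defined.

Lemma pack3 R0 rho Lt y t : 1 <= R0 -> 0 < rho -> rho <= t -> NoDup Lt ->
  (forall p, In p Lt -> admissible R0 p) -> separated rho Lt ->
  count_in_ball Lt y t <= 4 * (48 * R0)^3 * (t / rho)^3.
Proof.
  intros HR Hr Ht Hnd Hadm Hsep.
  set (h := h_of R0 rho). set (n := ncell t h).
  assert (Hh : 0 < h) by (unfold h, h_of; apply Rdiv_lt_0_compat; lra).
  set (Ps := list_prod (seq 0 4) (list_prod (list_prod (seq 0 n) (seq 0 n)) (seq 0 n))).
  set (P := fun (j : nat * (nat * nat * nat)) z =>
    andb (cls (fst j) z) (if cell_dec (cell R0 rho t y (fst j) z) (snd j) then true else false)).
  unfold count_in_ball.
  eapply Rle_trans; [apply (union_bound P Ps)|].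
  { intros z Hz. apply filter_In in Hz as [HzL Hzb]. apply in_ballb_true in Hzb.
    destruct (cls_exists R0 z (Hadm z HzL)) as [k [Hk Hck]].
    exists (k, cell R0 rho t y k z). split.
    - unfold Ps. apply in_prod. apply in_seq; lia.
      pose proof (cell_in R0 rho t y z k n Hr HR ltac:(lra) eq_refl Hzb).
      destruct (cell R0 rho t y k z) as [[i1 i2] i3].
      apply in_prod; [apply in_prod|]; apply in_seq; lia.
    - unfold P; simpl. rewrite Hck. destruct (cell_dec _ _); auto. }
  eapply Rle_trans; [apply (sumf_const_le _ 1)|].
  { intros j _. replace 1 with (INR 1) by reflexivity. apply le_INR.
    apply length_le1. apply NoDup_filter, NoDup_filter, Hnd.
    intros p q Hp Hq Hpq.
    apply filter_In in Hp as [Hp HPp]. apply filter_In in Hq as [Hq HPq].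
    apply filter_In in Hp as [Hp Hpb]. apply filter_In in Hq as [Hq Hqb].
    apply in_ballb_true in Hpb, Hqb.
    unfold P in HPp, HPq. apply andb_prop in HPp as [Hc1 Hc2]. apply andb_prop in HPq as [_ Hc3].
    destruct (cell_dec (cell R0 rho t y (fst j) p) (snd j)) as [E1|]; [|discriminate].
    destruct (cell_dec (cell R0 rho t y (fst j) q) (snd j)) as [E2|]; [|discriminate].
    pose proof (close R0 rho t y p q (fst j) HR Hr (Hadm p Hp) (Hadm q Hq) Hpb Hqb Hc1
      (eq_trans E1 (eq_sym E2))).
    pose proof (Hsep p q Hp Hq Hpq). lra. }
  unfold Ps. rewrite !length_prod, !length_seq.
  rewrite Rmult_1_r, !mult_INR.
  assert (Hn : INR n <= 48 * R0 * (t / rho)).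
  { unfold n. eapply Rle_trans; [apply ncell_bound; lra|].
    unfold h, h_of. replace (2 * t / (rho / (12 * R0)) + 2) with (24 * R0 * (t / rho) + 2) by (field; lra).
    assert (1 <= t / rho) by (apply (Rmult_le_reg_r rho); [lra|]; unfold Rdiv; rewrite Rmult_assoc, Rinv_l; lra).
    nra. }
  pose proof (pos_INR n). replace (INR 4) with 4 by (simpl; ring).
  replace (4 * (48 * R0) ^ 3 * (t / rho) ^ 3) with (4 * ((48 * R0 * (t/rho)) * (48 * R0 * (t/rho)) * (48 * R0 * (t/rho)))) by ring.
  apply Rmult_le_compat_l; [lra|].
  apply Rmult_le_compat; try nra.
Qed.

Definition cell4 (h t : R) (x z : pt) : nat * nat * nat * nat :=
  let '(a, b, c, d) := z in let '(xa, xb, xc, xd) := x in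
  (idx h (lo xa t h) a, idx h (lo xb t h) b, idx h (lo xc t h) c, idx h (lo xd t h) d).

Definition cell4_dec (u v : nat * nat * nat * nat) : {u = v} + {u <> v}.
Proof. repeat decide equality. Defined.

Lemma cover4 L delta s x : 0 < delta -> delta <= s -> s <= 1 -> frostman2 delta L ->
  count_in_ball L x (4 * s) <= 26^4 * (s / delta)^2.
Proof.
  intros Hd Hds Hs1 HF.
  set (h := s / 3). set (t := 4 * s). set (n := ncell t h).
  assert (Hh : 0 < h) by (unfold h; lra). assert (Ht : 0 < t) by (unfold t; lra).
  set (Ps := list_prod (list_prod (list_prod (seq 0 n) (seq 0 n)) (seq 0 n)) (seq 0 n)).
  set (P := fun c z => if cell4_dec (cell4 h t x z) c then true else false).
  unfold count_in_ball. fold t.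
  eapply Rle_trans; [apply (union_bound P Ps)|].
  { intros z Hz. apply filter_In in Hz as [HzL Hzb]. apply in_ballb_true in Hzb.
    exists (cell4 h t x z). split.
    - unfold Ps. destruct z as [[[a b] c] d], x as [[[xa xb] xc] xd]. apply coords_lt in Hzb.
      unfold cell4. repeat apply in_prod; apply in_seq; split; try lia; simpl; apply idx_lt; tauto.
    - unfold P. destruct (cell4_dec _ _); auto. }
  eapply Rle_trans; [apply (sumf_const_le _ ((s / delta)^2))|].
  { intros j _.
    remember (filter (P j) (filter (in_ballb x t) L)) as Fl eqn:EF. destruct Fl as [|z0 l].
    - simpl. apply pow2_ge_0.
    - assert (Hz0 : In z0 (filter (P j) (filter (in_ballb x t) L))) by (rewrite <- EF; left; auto).
      rewrite EF.
      apply filter_In in Hz0 as [Hz0 HP0]. apply filter_In in Hz0 as [Hz0L Hz0b].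
      apply in_ballb_true in Hz0b.
      eapply Rle_trans; [|apply (HF s z0); lra]. unfold count_in_ball. apply le_INR.
      apply filter_filter_le. intros z HzL Hzb HPz. apply in_ballb_true. apply in_ballb_true in Hzb.
      unfold P in HP0, HPz.
      destruct (cell4_dec (cell4 h t x z0) j) as [E0|]; [|discriminate].
      destruct (cell4_dec (cell4 h t x z) j) as [E1|]; [|discriminate].
      rewrite <- E0 in E1. clear - E1 Hzb Hz0b Hh Ht.
      destruct z as [[[a b] c] d], z0 as [[[a' b'] c'] d'], x as [[[xa xb] xc] xd].
      apply coords_lt in Hzb, Hz0b. simpl in E1. injection E1; intros I4 I3 I2 I1.
      apply (idx_eq h t xa) in I1; try tauto. apply (idx_eq h t xb) in I2; try tauto.
      apply (idx_eq h t xc) in I3; try tauto. apply (idx_eq h t xd) in I4; try tauto.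
      apply (dist4_small _ _ _ _ _ _ _ _ h h h h); unfold h in *; try lra.
      replace ((s/3)^2 + (s/3)^2 + (s/3)^2 + (s/3)^2) with (4/9 * s^2) by field. nra. }
  unfold Ps. rewrite !length_prod, !length_seq, !mult_INR.
  assert (Hn : INR n <= 26).
  { unfold n. eapply Rle_trans; [apply ncell_bound; lra|].
    unfold t, h. replace (2 * (4 * s) / (s / 3) + 2) with 26 by (field; lra). lra. }
  pose proof (pos_INR n). assert (0 <= (s/delta)^2) by apply pow2_ge_0.
  apply Rmult_le_compat_r; [lra|].
  replace (26^4) with (26 * 26 * 26 * 26) by ring.
  repeat apply Rmult_le_compat; try nra.
Qed.

Lemma select rho Lt : 0 < rho -> exists S D, NoDup S /\ incl S Lt /\ frostman2 rho S /\ Pw D /\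
  (forall d, In d D -> rho <= snd d <= 1 /\ (snd d / rho)^2 <= 2 * count_in_ball S (fst d) (snd d)) /\
  (forall q, In q Lt -> In q S \/ exists d, In d D /\ dist4 q (fst d) < 3 * snd d).
Proof.
  intros Hr. destruct (greedy rho Lt) as [S [Hnd [Hinc [HF Hmax]]]].
  set (Rich := fun b : pt * R => rho <= snd b <= 1 /\ (snd b / rho)^2 <= 2 * count_in_ball S (fst b) (snd b)).
  destruct (collect (fun q => ~ In q S) Rich (fun q b => dist4 q (fst b) < snd b) Lt) as [Bs [HB HG]].
  { intros q Hq HqS. destruct (blocked_rich rho S q Hr HF (Hmax q Hq HqS)) as [x [s [Hs [Hq' Hc]]]].
    exists (x, s). unfold Rich; simpl; auto. }
  destruct (vitali Bs) as [D [HDinc [HPw HDcov]]].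
  { intros b Hb. destruct (HB b Hb) as [[? ?] _]. lra. }
  exists S, D. repeat split; auto.
  - apply (HB d (HDinc d H)).
  - apply (HB d (HDinc d H)).
  - apply (HB d (HDinc d H)).
  - intros q Hq. destruct (classic (In q S)) as [|HqS]; [left; auto|right].
    destruct (HG q Hq HqS) as [b [Hb Hqb]]. destruct (HDcov b Hb) as [d [Hd [Hm Hle]]].
    exists d. split; auto. unfold meets in Hm.
    pose proof (dist4_tri q (fst b) (fst d)). lra.
Qed.

Lemma filter_all {A} (f : A -> bool) L : (forall z, In z L -> f z = true) -> filter f L = L.
Proof.
  induction L as [|a L IH]; simpl; intros H; auto.
  rewrite (H a (or_introl eq_refl)), IH; auto.
Qed.

Lemma Rpower_le1 d e : 0 < d -> d <= 1 -> 0 < e -> Rpower d e <= 1.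
Proof.
  intros. unfold Rpower. rewrite <- exp_0. 
  destruct (Req_dec d 1) as [->|Hd]. { rewrite ln_1, Rmult_0_r. lra. }
  left. apply exp_increasing. assert (ln d < 0) by (rewrite <- ln_1; apply ln_increasing; lra). nra.
Qed.

Theorem lemma4p1 :
  forall R0 : R, 1 <= R0 ->
  exists C : R, 0 < C /\
  (* part (i) *)
  (forall (delta rho r : R) (Lt : list pt),
      0 < delta -> delta <= rho -> rho <= r -> r <= 1 ->
      NoDup Lt -> (forall p, In p Lt -> admissible R0 p) ->
      separated rho Lt ->
      (exists x : pt, forall p, In p Lt -> in_ball x r p) ->
      exists Lt' : list pt, sublist Lt' Lt /\
        C * (rho / r) * card Lt <= card Lt' /\ frostman2 rho Lt') /\
  (* part (ii) *)
  (forall eps : R, 0 < eps ->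
   exists c : R, 0 < c /\
   forall (delta rho r : R) (L Lt : list pt),
      0 < delta -> delta <= rho -> rho <= r -> r <= 1 ->
      NoDup L -> NoDup Lt ->
      (forall p, In p L -> admissible R0 p) ->
      (forall p, In p Lt -> admissible R0 p) ->
      frostman2 delta L ->
      (forall p, In p L -> exists q, In q Lt /\ in_ball q rho p) ->
      exists Lt' : list pt, sublist Lt' Lt /\
        C * c * Rpower delta eps * (delta / rho)^2 * card L <= card Lt' /\
        frostman2 rho Lt').
Proof.
  intros R0 HR.
  set (A := 4 * (48 * R0)^3). set (N := 26^4).
  assert (HA : 0 < A) by (unfold A; apply Rmult_lt_0_compat; [lra|apply pow_lt; lra]).
  assert (HN : 0 < N) by (unfold N; lra).
  exists (1 / ((1 + 54 * A) * (1 + 2 * N))). split.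
  { apply Rdiv_lt_0_compat; [lra|]. apply Rmult_lt_0_compat; lra. }
  split.
  - intros delta rho r Lt Hd Hdr Hrr Hr1 Hnd Hadm Hsep [x0 Hx0].
    assert (Hrho : 0 < rho) by lra.
    destruct (select rho Lt Hrho) as [S [D [HSnd [HSinc [HSF [HPw [HDp HDcov]]]]]]].
    exists S. split; [split; auto|]. split; [|auto].
    unfold card.
    assert (U : INR (length Lt) <= sumf (fun j => INR (length (filter (in_ballb (fst j) (snd j)) Lt)))
       (map (fun q => (q, rho / 2)) S ++ map (fun d => (fst d, 3 * snd d)) D)).
    { apply union_bound. intros z Hz. destruct (HDcov z Hz) as [HzS|[d [Hd' Hzd]]].
      - exists (z, rho / 2). split.
        + apply in_or_app; left; apply in_map_iff; exists z; auto.
        + apply in_ballb_true. simpl. rewrite dist4_refl. lra.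
      - exists (fst d, 3 * snd d). split.
        + apply in_or_app; right; apply (in_map (fun d => (fst d, 3 * snd d))); auto.
        + apply in_ballb_true; simpl; auto. }
    rewrite sumf_app, !sumf_map in U. cbn [fst snd] in U.
    assert (U1 : sumf (fun x => INR (length (filter (in_ballb x (rho / 2)) Lt))) S <= INR (length S)).
    { eapply Rle_trans; [apply (sumf_const_le _ 1)|lra].
      intros q _. replace 1 with (INR 1) by reflexivity. apply le_INR.
      apply length_le1; [apply NoDup_filter; auto|].
      intros p p' Hp Hp' Hpp. apply filter_In in Hp as [Hp Hpb]. apply filter_In in Hp' as [Hp' Hpb'].
      apply in_ballb_true in Hpb, Hpb'. pose proof (Hsep p p' Hp Hp' Hpp).
      pose proof (dist4_tri p q p'). rewrite (dist4_sym q p') in H0. lra. }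
    assert (HLt : INR (length Lt) <= A * (r / rho)^3).
    { eapply Rle_trans; [|apply (pack3 R0 rho Lt x0 r HR Hrho Hrr Hnd Hadm Hsep)].
      unfold count_in_ball. rewrite filter_all; [lra|]. intros z Hz. apply in_ballb_true. apply Hx0; auto. }
    assert (Hv : 1 <= r / rho) by (apply (Rmult_le_reg_r rho); [lra|]; unfold Rdiv; rewrite Rmult_assoc, Rinv_l; lra).
    assert (U2 : sumf (fun x => INR (length (filter (in_ballb (fst x) (3 * snd x)) Lt))) D <=
                 54 * A * (r / rho) * INR (length S)).
    { eapply Rle_trans; [apply (sumf_le _ (fun d => 54 * A * (r / rho) * count_in_ball S (fst d) (snd d)))|].
      - intros d Hd'. destruct (HDp d Hd') as [[Hs1 Hs2] Hrich].
        set (s := snd d) in *.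
        pose proof (pack3 R0 rho Lt (fst d) (3 * s) HR Hrho ltac:(lra) Hnd Hadm Hsep) as P1.
        unfold count_in_ball in P1. fold A in P1.
        pose proof (le_INR _ _ (filter_length_le (in_ballb (fst d) (3 * s)) Lt)) as P2.
        set (cnt := INR (length (filter (in_ballb (fst d) (3 * s)) Lt))) in *.
        set (u := s / rho) in *. set (v := r / rho) in *.
        assert (Hu : 1 <= u) by (unfold u; apply (Rmult_le_reg_r rho); [lra|]; unfold Rdiv; rewrite Rmult_assoc, Rinv_l; lra).
        replace (3 * s / rho) with (3 * u) in P1 by (unfold u; field; lra).
        assert (cnt <= 27 * A * v * u^2).
        { destruct (Rle_dec u v).
          - assert (u^3 <= v * u^2) by (replace (u^3) with (u * u^2) by ring; apply Rmult_le_compat_r; nra).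
            replace ((3 * u)^3) with (27 * u^3) in P1 by ring.
            assert (A * u^3 <= A * (v * u^2)) by (apply Rmult_le_compat_l; lra). lra.
          - assert (v^3 <= v * u^2) by (replace (v^3) with (v * v^2) by ring; apply Rmult_le_compat_l; [lra|apply pow_incr; lra]).
            assert (0 <= v * u^2) by nra.
            assert (A * v^3 <= A * (v * u^2)) by (apply Rmult_le_compat_l; lra).
            assert (0 <= A * (v * u^2)) by (apply Rmult_le_pos; lra). lra. }
        assert (0 <= 27 * A * v) by (apply Rmult_le_pos; lra).
        assert (27 * A * v * u^2 <= 27 * A * v * (2 * count_in_ball S (fst d) s)) by
          (apply Rmult_le_compat_l; lra). lra.
      - rewrite sumf_scale. pose proof (disjoint_sum D S HPw). unfold count_in_ball.
        assert (0 <= 54 * A * (r / rho)) by nra. nra. }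
    assert (Hrr' : rho / r * (r / rho) = 1) by (field; lra).
    assert (Hrr2 : 0 < rho / r <= 1) by (split; [apply Rdiv_lt_0_compat; lra|];
      apply (Rmult_le_reg_r r); [lra|]; unfold Rdiv; rewrite Rmult_assoc, Rinv_l; lra).
    pose proof (pos_INR (length S)).
    assert (rho / r * INR (length Lt) <= (1 + 54 * A) * INR (length S)).
    { assert (rho / r * INR (length Lt) <= rho / r * INR (length S) + 54 * A * (rho / r * (r / rho)) * INR (length S)) by nra.
      rewrite Hrr' in H0. nra. }
    assert (HC : 1 / ((1 + 54 * A) * (1 + 2 * N)) * (1 + 54 * A) <= 1).
    { replace (1 / ((1 + 54 * A) * (1 + 2 * N)) * (1 + 54 * A)) with (1 / (1 + 2 * N)) by (field; lra).
      apply (Rmult_le_reg_r (1 + 2 * N)); [lra|]. unfold Rdiv. rewrite Rmult_1_l, Rinv_l; lra. }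
    assert (0 < 1 / ((1 + 54 * A) * (1 + 2 * N))) by (apply Rdiv_lt_0_compat; [lra|]; apply Rmult_lt_0_compat; lra).
    rewrite Rmult_assoc. nra.
  - intros eps Heps. exists 1. split; [lra|].
    intros delta rho r L Lt Hd Hdr Hrr Hr1 HndL HndLt HadmL HadmLt HFL Hcov.
    assert (Hrho : 0 < rho) by lra.
    destruct (select rho Lt Hrho) as [S [D [HSnd [HSinc [HSF [HPw [HDp HDcov]]]]]]].
    exists S. split; [split; auto|]. split; [|auto].
    unfold card.
    assert (U : INR (length L) <= sumf (fun j => INR (length (filter (in_ballb (fst j) (snd j)) L)))
       (map (fun q => (q, rho)) S ++ map (fun d => (fst d, 4 * snd d)) D)).
    { apply union_bound. intros z Hz. destruct (Hcov z Hz) as [q [Hq Hzq]]. unfold in_ball in Hzq.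
      destruct (HDcov q Hq) as [HqS|[d [Hd' Hqd]]].
      - exists (q, rho). split.
        + apply in_or_app; left; apply (in_map (fun q => (q, rho))); auto.
        + apply in_ballb_true. simpl. auto.
      - exists (fst d, 4 * snd d). split.
        + apply in_or_app; right; apply (in_map (fun d => (fst d, 4 * snd d))); auto.
        + apply in_ballb_true; simpl. destruct (HDp d Hd') as [[? ?] _].
          pose proof (dist4_tri z q (fst d)). lra. }
    rewrite sumf_app, !sumf_map in U. cbn [fst snd] in U.
    assert (Hw : 0 <= (rho / delta)^2) by apply pow2_ge_0.
    assert (U1 : sumf (fun x => INR (length (filter (in_ballb x rho) L))) S <= INR (length S) * (rho / delta)^2).
    { apply sumf_const_le. intros q _. apply (HFL rho q). lra. }
    assert (U2 : sumf (fun x => INR (length (filter (in_ballb (fst x) (4 * snd x)) L))) D <=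
                 2 * N * (rho / delta)^2 * INR (length S)).
    { eapply Rle_trans; [apply (sumf_le _ (fun d => 2 * N * (rho / delta)^2 * count_in_ball S (fst d) (snd d)))|].
      - intros d Hd'. destruct (HDp d Hd') as [[Hs1 Hs2] Hrich].
        set (s := snd d) in *.
        pose proof (cover4 L delta s (fst d) Hd ltac:(lra) Hs2 HFL) as P1. fold N in P1.
        unfold count_in_ball in P1.
        replace ((s / delta)^2) with ((s / rho)^2 * (rho / delta)^2) in P1 by (field; lra).
        assert (0 <= N * (rho / delta)^2) by (apply Rmult_le_pos; lra).
        assert (N * (rho / delta)^2 * (s / rho)^2 <= N * (rho / delta)^2 * (2 * count_in_ball S (fst d) s))
          by (apply Rmult_le_compat_l; lra). lra.
      - rewrite sumf_scale. pose proof (disjoint_sum D S HPw). unfold count_in_ball.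
        assert (0 <= 2 * N * (rho / delta)^2) by (apply Rmult_le_pos; lra).
        apply Rmult_le_compat_l; auto. }
    assert (HL : INR (length L) <= (1 + 2 * N) * (rho / delta)^2 * INR (length S)) by lra.
    assert (Hww : (delta / rho)^2 * (rho / delta)^2 = 1) by (field; lra).
    assert (Hdw : 0 <= (delta / rho)^2) by apply pow2_ge_0.
    assert (HL2 : (delta / rho)^2 * INR (length L) <= (1 + 2 * N) * INR (length S)).
    { assert ((delta / rho)^2 * INR (length L) <= (delta / rho)^2 * ((1 + 2 * N) * (rho / delta)^2 * INR (length S)))
        by (apply Rmult_le_compat_l; auto).
      replace ((delta / rho)^2 * ((1 + 2 * N) * (rho / delta)^2 * INR (length S))) with
        ((delta / rho)^2 * (rho / delta)^2 * ((1 + 2 * N) * INR (length S))) in H by ring.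
      rewrite Hww in H. lra. }
    assert (HC : 1 / ((1 + 54 * A) * (1 + 2 * N)) * (1 + 2 * N) <= 1).
    { replace (1 / ((1 + 54 * A) * (1 + 2 * N)) * (1 + 2 * N)) with (1 / (1 + 54 * A)) by (field; lra).
      apply (Rmult_le_reg_r (1 + 54 * A)); [lra|]. unfold Rdiv. rewrite Rmult_1_l, Rinv_l; lra. }
    assert (HC0 : 0 < 1 / ((1 + 54 * A) * (1 + 2 * N))) by (apply Rdiv_lt_0_compat; [lra|]; apply Rmult_lt_0_compat; lra).
    pose proof (Rpower_le1 delta eps Hd ltac:(lra) Heps) as HP.
    assert (HP0 : 0 < Rpower delta eps) by (unfold Rpower; apply exp_pos).
    pose proof (pos_INR (length S)). pose proof (pos_INR (length L)).
    set (C := 1 / ((1 + 54 * A) * (1 + 2 * N))) in *.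
    set (w := (delta / rho)^2) in *.
    set (P := Rpower delta eps) in *.
    replace (C * 1 * P * w * INR (length L)) with (P * (C * (w * INR (length L)))) by ring.
    assert (C * (w * INR (length L)) <= C * ((1 + 2 * N) * INR (length S))) by (apply Rmult_le_compat_l; lra).
    assert (C * ((1 + 2 * N) * INR (length S)) <= INR (length S)) by nra.
    assert (0 <= C * (w * INR (length L))) by (apply Rmult_le_pos; [lra|apply Rmult_le_pos; lra]).
    nra.
Qed.
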